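(* Let $\pi(\vec{x},y)$ be a Skolem constraint (a finite conjunction of linear arithmetic literals, as defined in the context) and let $\mathit{sk}(\vec{x})$ be the term returned by the procedure $\textsc{ExtractSk}(\vec{x},y,\pi)$ described in the context. Assume that the uninterpreted function $f_{\textsc{rng}}$ occurring in $\mathit{sk}$ is interpreted so that postconditions (P1)–(P5) of the context hold. Then $\mathit{sk}$ is a valid Skolem term for $\pi$: for every valuation of $\vec{x}$ such that $\exists y.\,\pi(\vec{x},y)$ holds, $\pi(\vec{x},\mathit{sk}(\vec{x}))$ holds.
   Context: Work in linear integer arithmetic or linear real arithmetic, with universally quantified variables $\vec{x}$ and a single existentially quantified variable $y$ of sort $T\in\{\mathbb{Z},\mathbb{R}\}$. A Skolem constraint is a conjunction $\pi(\vec{x},y)=\bigwedge_{r\in E\cup D\cup G\cup GE\cup L\cup LE} r(\vec{x},y)$ of literals, each normalized to one of the forms $E=\{y=f_i(\vec{x})\}$, $D=\{y\neq f_i(\vec{x})\}$, $G=\{y>f_i(\vec{x})\}$, $GE=\{y\ge f_i(\vec{x})\}$, $L=\{y<f_i(\vec{x})\}$, $LE=\{y\le f_i(\vec{x})\}$ with $f_i$ linear terms over $\vec{x}$ (over the integers, $A<B$ is rewritten as $A\le B-1$ and $A\ge B$ as $A>B-1$). A term $\mathit{sk}(\vec{x})$ is a valid Skolem term for $\pi$ if $\pi(\vec{x},\mathit{sk}(\vec{x}))$ holds for every $\vec{x}$ with $\exists y.\pi(\vec{x},y)$. Helpers: $\textsc{ASN}(y\sim e(\vec{x}))=e$; $\textsc{MIN}(\{s\})=\textsc{MAX}(\{s\})=\textsc{ASN}(s)$;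 $\textsc{MIN}(S)=\mathit{ite}(\textsc{ASN}(s)\le \textsc{MIN}(S\setminus\{s\}),\textsc{ASN}(s),\textsc{MIN}(S\setminus\{s\}))$ and $\textsc{MAX}(S)=\mathit{ite}(\textsc{ASN}(s)\ge \textsc{MAX}(S\setminus\{s\}),\textsc{ASN}(s),\textsc{MAX}(S\setminus\{s\}))$ for $s\in S$ (symbolic min/max). Uninterpreted random number generator: $f_{\textsc{rng}}(H,\ell_c,u_c,\ell,u)$ takes a collection $H$ of terms, two booleans $\ell_c,u_c$ and two bounds, returning a value of sort $T$; its interpretation must satisfy: (P1) $f_{\textsc{rng}}(H,\cdot)\neq h$ for all $h\in H$; (P2) $f_{\textsc{rng}}(H,\bot,\bot,\ell,u)\in(\ell,u)$; (P3) $f_{\textsc{rng}}(H,\bot,\top,\ell,u)\in(\ell,u]$; (P4) $f_{\textsc{rng}}(H,\top,\bot,\ell,u)\in[\ell,u)$; (P5) $f_{\textsc{rng}}(H,\top,\top,\ell,u)\in[\ell,u]$. Here $-\infty,+\infty$ denote unconstrained bounds. Procedure $\textsc{ExtractSk}(\vec{x},y,\pi)$: set $\ell_{closed}=u_{closed}=\bot$ and $\ell,u$ undefined. If $E\neq\varnothing$, return $\textsc{ASN}(e)$ for some $e\in E$. If $G\cup GE\neq\varnothing$: $\ell:=\textsc{MAX}(G\cup GE)$, $\ell_{closed}:=(G=\varnothing\lor \textsc{MAX}(G)<\textsc{MAX}(GE))$. If $L\cup LE\neq\varnothing$: $u:=\textsc{MIN}(L\cup LE)$, $u_{closed}:=(L=\varnothing\lor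 \textsc{MIN}(L)>\textsc{MIN}(LE))$. If $\ell(\vec{x})=u(\vec{x})$, return $\ell$. Let $H=\{\textsc{ASN}(d)\mid d\in D\}$. If both $\ell,u$ undefined return $f_{\textsc{rng}}(H,\top,\top,-\infty,+\infty)$; if only $\ell$ undefined return $f_{\textsc{rng}}(H,\top,u_{closed},-\infty,u)$; if only $u$ undefined return $f_{\textsc{rng}}(H,\ell_{closed},\top,\ell,+\infty)$; otherwise return $f_{\textsc{rng}}(H,\ell_{closed},u_{closed},\ell,u)$. *)

(* Defs.v *)
From HB Require Import structures.
From mathcomp Require Import all_boot all_order all_algebra.
From mathcomp Require Import reals.

Set Implicit Arguments.
Unset Strict Implicit.
Unset Printing Implicit Defensive.

Import Order.TTheory GRing.Theory Num.Theory.
Local Open Scope ring_scope.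

Section Skolem.
Context (T : realDomainType) (n : nat).

Definition valuation := 'I_n -> T.

Record lterm := LTerm { lt_coef : 'I_n -> T; lt_const : T }.

Definition lt_eval (f : lterm) (x : valuation) : T :=
  lt_const f + \sum_(i < n) lt_coef f i * x i.

Definition lterm0 : lterm := LTerm (fun _ => 0) 0.

Inductive rel_kind := REq | RNeq | RGt | RGe | RLt | RLe.

Record literal := Lit { lit_kind : rel_kind; lit_term : lterm }.

Definition lit_holds (r : literal) (x : valuation) (y : T) : bool :=
  let v := lt_eval (lit_term r) x in
  match lit_kind r with
  | REq => y == v
  | RNeq => y != v
  | RGt => v < y
  | RGe => v <= y
  | RLt => y < v
  | RLe => y <= v
  end.

Definition skolem_constraint := seq literal.

Definition holds (pi : skolem_constraint) (x : valuation) (y : T) : bool :=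
  all (fun r => lit_holds r x y) pi.

Definition kind_eqb (k1 k2 : rel_kind) : bool :=
  match k1, k2 with
  | REq, REq | RNeq, RNeq | RGt, RGt | RGe, RGe | RLt, RLt | RLe, RLe => true
  | _, _ => false
  end.

Definition lits_of (k : rel_kind) (pi : skolem_constraint) : seq lterm :=
  [seq lit_term r | r <- pi & kind_eqb (lit_kind r) k].

(* Symbolic MAX / MIN as in the paper (ite chains), evaluated at x;
   None stands for the (undefined) MAX/MIN of the empty set. *)
Fixpoint MAXv (S : seq lterm) (x : valuation) : option T :=
  match S with
  | [::] => None
  | s :: S' =>
      match MAXv S' x with
      | None => Some (lt_eval s x)
      | Some m => Some (if lt_eval s x >= m then lt_eval s x else m)
      end
  end.

Fixpoint MINv (S : seq lterm) (x : valuation) : option T :=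
  match S with
  | [::] => None
  | s :: S' =>
      match MINv S' x with
      | None => Some (lt_eval s x)
      | Some m => Some (if lt_eval s x <= m then lt_eval s x else m)
      end
  end.

(* Interpretation of f_rng: f_rng(H, l_c, u_c, l, u), bound None = -oo / +oo. *)
Definition rng_fun := seq T -> bool -> bool -> option T -> option T -> T.

Definition in_interval (lc uc : bool) (l u : option T) (v : T) : bool :=
  (match l with None => true | Some a => if lc then a <= v else a < v end) &&
  (match u with None => true | Some b => if uc then v <= b else v < b end).

(* Postconditions (P1)-(P5): whenever the requested value exists (some
   value of sort T avoids H and lies in the requested interval), f_rng
   returns such a value. *)
Definition rng_spec (rng : rng_fun) : Prop :=
  forall (H : seq T) (lc uc : bool) (l u : option T),
    (exists v : T, v \notin H /\ in_interval lc uc l u v) ->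
    rng H lc uc l u \notin H /\ in_interval lc uc l u (rng H lc uc l u).

(* The procedure ExtractSk, with the term it returns evaluated at x.
   [k] selects "some e in E" (the k-th equality literal). *)
Definition ExtractSk (rng : rng_fun) (k : nat) (pi : skolem_constraint)
    (x : valuation) : T :=
  let E := lits_of REq pi in
  let D := lits_of RNeq pi in
  let G := lits_of RGt pi in
  let GE := lits_of RGe pi in
  let L := lits_of RLt pi in
  let LE := lits_of RLe pi in
  if size E != 0%N then lt_eval (nth lterm0 E k) x else
  let l := MAXv (G ++ GE) x in
  let lc := (size G == 0%N) ||
            (match MAXv G x, MAXv GE x with
             | Some a, Some b => a < b | _, _ => false end) in
  let u := MINv (L ++ LE) x in
  let uc := (size L == 0%N) ||
            (match MINv L x, MINv LE x with
             | Some a, Some b => a > b | _, _ => false end) in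
  let H := [seq lt_eval d x | d <- D] in
  match l, u with
  | Some lv, Some uv => if lv == uv then lv else rng H lc uc l u
  | None, None => rng H true true None None
  | None, Some _ => rng H true uc None u
  | Some _, None => rng H lc true l None
  end.

Definition valid_skolem (pi : skolem_constraint) (sk : valuation -> T) : Prop :=
  forall x : valuation, (exists y : T, holds pi x y) -> holds pi x (sk x).

End Skolem.

Arguments LTerm {T n}.
Arguments Lit {T n}.

Definition ExtractSk_sound (T : realDomainType) : Prop :=
  forall (n : nat) (pi : skolem_constraint T n) (rng : rng_fun T) (k : nat),
    rng_spec rng ->
    (0 < size (lits_of REq pi) -> k < size (lits_of REq pi))%N ->
    valid_skolem pi (ExtractSk rng k pi).

(* Main.v *)
Require Import Defs.
From mathcomp Require Import all_boot all_order all_algebra.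
From mathcomp Require Import reals.

Set Implicit Arguments.
Unset Strict Implicit.
Unset Printing Implicit Defensive.
Import Order.TTheory GRing.Theory Num.Theory.
Local Open Scope ring_scope.

Section Proof.
Context (T : realDomainType) (n : nat).
Implicit Types (x : valuation T n) (S : seq (lterm T n)) (pi : skolem_constraint T n).

Lemma holds_split pi x y : holds pi x y =
  [&& all (fun f => y == lt_eval f x) (lits_of REq pi),
      all (fun f => y != lt_eval f x) (lits_of RNeq pi),
      all (fun f => lt_eval f x < y) (lits_of RGt pi),
      all (fun f => lt_eval f x <= y) (lits_of RGe pi),
      all (fun f => y < lt_eval f x) (lits_of RLt pi) &
      all (fun f => y <= lt_eval f x) (lits_of RLe pi)].
Proof.
elim: pi => [|[k t] pi IH] //=.
rewrite /holds /= in IH *; rewrite IH /lits_of /lit_holds /=.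
case: k => /=; bool_congr.
Qed.

Lemma MAXv_none S x : MAXv S x = None -> S = [::].
Proof. by case: S => //= s S; case: (MAXv S x). Qed.

Lemma MINv_none S x : MINv S x = None -> S = [::].
Proof. by case: S => //= s S; case: (MINv S x). Qed.

Lemma MAXv_le S x m v : MAXv S x = Some m ->
  (m <= v) = all (fun s => lt_eval s x <= v) S.
Proof.
elim: S m => //= s S IH m.
case E: (MAXv S x) => [m'|] [<-].
  rewrite -(IH m') //.
  case: ifP => h.
    apply/idP/idP; [move=> h1; rewrite h1 (le_trans h h1) //|by case/andP].
  apply/idP/idP; last by case/andP.
  move=> h1; rewrite h1 andbT; apply: le_trans h1; rewrite ltW // ltNge h //.
by rewrite (MAXv_none E) andbT.
Qed.

Lemma MAXv_lt S x m v : MAXv S x = Some m ->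
  (m < v) = all (fun s => lt_eval s x < v) S.
Proof.
elim: S m => //= s S IH m.
case E: (MAXv S x) => [m'|] [<-].
  rewrite -(IH m') //.
  case: ifP => h.
    apply/idP/idP; [move=> h1; rewrite h1 (le_lt_trans h h1) //|by case/andP].
  apply/idP/idP; last by case/andP.
  move=> h1; rewrite h1 andbT; apply: lt_trans h1; rewrite ltNge h //.
by rewrite (MAXv_none E) andbT.
Qed.

Lemma MINv_le S x m v : MINv S x = Some m ->
  (v <= m) = all (fun s => v <= lt_eval s x) S.
Proof.
elim: S m => //= s S IH m.
case E: (MINv S x) => [m'|] [<-].
  rewrite -(IH m') //.
  case: ifP => h.
    apply/idP/idP; [move=> h1; rewrite h1 (le_trans h1 h) //|by case/andP].
  apply/idP/idP; last by case/andP.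
  move=> h1; rewrite h1 andbT; apply: le_trans h1 _; rewrite ltW // ltNge h //.
by rewrite (MINv_none E) andbT.
Qed.

Lemma MINv_lt S x m v : MINv S x = Some m ->
  (v < m) = all (fun s => v < lt_eval s x) S.
Proof.
elim: S m => //= s S IH m.
case E: (MINv S x) => [m'|] [<-].
  rewrite -(IH m') //.
  case: ifP => h.
    apply/idP/idP; [move=> h1; rewrite h1 (lt_le_trans h1 h) //|by case/andP].
  apply/idP/idP; last by case/andP.
  move=> h1; rewrite h1 andbT; apply: lt_trans h1 _; rewrite ltNge h //.
by rewrite (MINv_none E) andbT.
Qed.

Definition lowb (lc : bool) (l : option T) v :=
  match l with None => true | Some a => if lc then a <= v else a < v end.
Definition uppb (uc : bool) (u : option T) v :=
  match u with None => true | Some b => if uc then v <= b else v < b end.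

Lemma lowb_ok G GE x v :
  lowb ((size G == 0%N) ||
            (match MAXv G x, MAXv GE x with
             | Some a, Some b => a < b | _, _ => false end)) (MAXv (G ++ GE) x) v
  = all (fun f => lt_eval f x < v) G && all (fun f => lt_eval f x <= v) GE.
Proof.
case E: (MAXv (G ++ GE) x) => [m|] /=; last first.
  by move: (MAXv_none E); case: G {E} => //; case: GE.
have [G0|Gn] := boolP (size G == 0%N).
  rewrite /=; move: E; rewrite (size0nil (eqP G0)) /= => E.
  by rewrite (MAXv_le _ E).
rewrite /=.
case EG: (MAXv G x) => [a|]; last by rewrite (MAXv_none EG) in Gn.
case EGE: (MAXv GE x) => [b|]; last first.
  move: E; rewrite (MAXv_none EGE) cats0 => E; by rewrite (MAXv_lt _ E) andbT.
rewrite -(MAXv_lt _ EG) -(MAXv_le _ EGE).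
case: ifP => hab.
  rewrite (MAXv_le _ E) all_cat -(MAXv_le _ EG) -(MAXv_le _ EGE).
  apply/idP/idP => /andP[h1 h2]; rewrite h2 andbT.
    exact: lt_le_trans hab h2.
  exact: ltW.
rewrite (MAXv_lt _ E) all_cat -(MAXv_lt _ EG) -(MAXv_lt _ EGE).
apply/idP/idP => /andP[h1 h2]; rewrite h1 //=.
  exact: ltW.
by apply: le_lt_trans h1; rewrite leNgt hab.
Qed.

Lemma uppb_ok L LE x v :
  uppb ((size L == 0%N) ||
            (match MINv L x, MINv LE x with
             | Some a, Some b => a > b | _, _ => false end)) (MINv (L ++ LE) x) v
  = all (fun f => v < lt_eval f x) L && all (fun f => v <= lt_eval f x) LE.
Proof.
case E: (MINv (L ++ LE) x) => [m|] /=; last first.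
  by move: (MINv_none E); case: L {E} => //; case: LE.
have [G0|Gn] := boolP (size L == 0%N).
  rewrite /=; move: E; rewrite (size0nil (eqP G0)) /= => E.
  by rewrite (MINv_le _ E).
rewrite /=.
case EG: (MINv L x) => [a|]; last by rewrite (MINv_none EG) in Gn.
case EGE: (MINv LE x) => [b|]; last first.
  move: E; rewrite (MINv_none EGE) cats0 => E; by rewrite (MINv_lt _ E) andbT.
rewrite -(MINv_lt _ EG) -(MINv_le _ EGE).
case: ifP => hab.
  rewrite (MINv_le _ E) all_cat -(MINv_le _ EG) -(MINv_le _ EGE).
  apply/idP/idP => /andP[h1 h2]; rewrite h2 andbT.
    exact: le_lt_trans h2 hab.
  exact: ltW.
rewrite (MINv_lt _ E) all_cat -(MINv_lt _ EG) -(MINv_lt _ EGE).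
apply/idP/idP => /andP[h1 h2]; rewrite h1 //=.
  exact: ltW.
by apply: lt_le_trans h1 _; rewrite leNgt hab.
Qed.

Lemma notin_map D x v :
  (v \notin [seq lt_eval d x | d <- D]) = all (fun f => v != lt_eval f x) D.
Proof. by elim: D => //= d D IH; rewrite in_cons negb_or IH. Qed.

End Proof.

Lemma sound (T : realDomainType) : ExtractSk_sound T.
Proof.
move=> m pi rng k Hrng Hk x [y Hy].
rewrite /ExtractSk.
move: (Hy); rewrite [holds _ _ y]holds_split => /and5P[hE hD hG hGE /andP[hL hLE]].
case: ifP => hsz.
  have Hk' : (k < size (lits_of REq pi))%N by apply: Hk; rewrite lt0n.
  by move/(all_nthP (lterm0 T m)): hE => /(_ _ Hk') /eqP <-.
have E0 : lits_of REq pi = [::] by move/negbFE: hsz; case: (lits_of REq pi).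
set G := lits_of RGt pi; set GE := lits_of RGe pi.
set L := lits_of RLt pi; set LE := lits_of RLe pi.
set D := lits_of RNeq pi.
have key : forall lc' uc' l u,
   (forall v, lowb lc' l v = all (fun f => lt_eval f x < v) G && all (fun f => lt_eval f x <= v) GE) ->
   (forall v, uppb uc' u v = all (fun f => v < lt_eval f x) L && all (fun f => v <= lt_eval f x) LE) ->
   holds pi x (rng [seq lt_eval d x | d <- D] lc' uc' l u).
  move=> lc' uc' l u hl hu.
  have [] := Hrng [seq lt_eval d x | d <- D] lc' uc' l u.
    exists y; rewrite notin_map hD; split=> //.
    have := hl y; have := hu y; rewrite /lowb /uppb /in_interval => -> ->.
    by rewrite hG hGE hL hLE.
  set r := rng _ _ _ _ _.
  rewrite notin_map /in_interval => h1 /andP[h2 h3].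
  have := hl r; have := hu r; rewrite /lowb /uppb h2 h3 => /esym/andP[h4 h5] /esym/andP[h6 h7].
  by rewrite holds_split E0 h1 h4 h5 h6 h7.
have hl := fun v => lowb_ok G GE x v.
have hu := fun v => uppb_ok L LE x v.
case El: (MAXv (G ++ GE) x) => [lv|]; case Eu: (MINv (L ++ LE) x) => [uv|];
  try (apply: key => v; [rewrite -(hl v) El // | rewrite -(hu v) Eu //]).
case: ifP => [/eqP luv|_]; last first.
  by apply: key => v; [rewrite -(hl v) El // | rewrite -(hu v) Eu //].
have := hl y; have := hu y; rewrite hG hGE hL hLE El Eu /lowb /uppb => h1 h2.
have a1 : lv <= y by move: h2; case: ifP => _ // /ltW.
have a2 : y <= uv by move: h1; case: ifP => _ // /ltW.
have -> : lv = y by apply/le_anti; rewrite a1 luv a2.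
exact: Hy.
Qed.

Theorem mainTheorem1 :
  ExtractSk_sound int /\ (forall R : realType, ExtractSk_sound R).
Proof. by split; [apply: sound | move=> R; apply: sound]. Qed.
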